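(* Let $X$ be a real reflexive Banach space and let $F \subset X$ be a convex existence set. For $v \in F$ and $t > 0$ put $F_t = (1-t)v + tF$, and let $C_v = \mathrm{cl}\left(\bigcup_{t>0} F_t\right)$. Then $C_v$ is an existence set.
   Context: For a non-empty set $F \subset X$ and $x \in X$, let $R_F(x) = \{ d \in F : \|d-c\| \le \|x-c\| \text{ for all } c \in F\}$. A non-empty set $F \subset X$ is an existence set if $R_F(x) \neq \emptyset$ for every $x \in X$. $\mathrm{cl}$ denotes norm closure. *)

(* Defs.v *)
From HB Require Import structures.
From mathcomp Require Import all_boot all_order all_algebra.
From mathcomp Require Import all_classical all_reals all_analysis.
Set Implicit Arguments. Unset Strict Implicit. Unset Printing Implicit Defensive.
Import Order.TTheory GRing.Theory Num.Theory.
Local Open Scope classical_set_scope.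
Local Open Scope ring_scope.

Section Defs.
Context {R : realType} {V : normedModType R}.

Definition bdd_lin_fun (f : V -> R) : Prop :=
  (forall (a : R) (x y : V), f (a *: x + y) = a * f x + f y) /\
  exists M : R, forall x : V, `|f x| <= M * `|x|.

(** Boundedness w.r.t. the dual norm
    ||f||* = inf {K | forall x, |f x| <= K ||x||} is written out as: there is
    M such that |Phi f| <= M K whenever K bounds f. *)
Definition bidual_elt (Phi : (V -> R) -> R) : Prop :=
  (forall (a : R) (f g : V -> R), bdd_lin_fun f -> bdd_lin_fun g ->
      Phi (fun x => a * f x + g x) = a * Phi f + Phi g) /\
  exists M : R, forall (f : V -> R) (K : R), bdd_lin_fun f ->
      (forall x : V, `|f x| <= K * `|x|) -> `|Phi f| <= M * K.

Definition reflexive_space : Prop :=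
  forall Phi : (V -> R) -> R, bidual_elt Phi ->
    exists x : V, forall f : V -> R, bdd_lin_fun f -> Phi f = f x.

Definition RF (F : set V) (x : V) : set V :=
  [set d | F d /\ forall c, F c -> `|d - c| <= `|x - c|].

Definition existence_set (F : set V) : Prop :=
  F !=set0 /\ forall x : V, RF F x !=set0.

Definition Ft (F : set V) (v : V) (t : R) : set V :=
  [set (1 - t) *: v + t *: y | y in F].

Definition Cv (F : set V) (v : V) : set V :=
  closure (\bigcup_(t in [set t : R | 0 < t]) Ft F v t).

End Defs.

(* Main.v *)
Require Import Defs.
From HB Require Import structures.
From mathcomp Require Import all_boot all_order all_algebra.
From mathcomp Require Import all_classical all_reals all_analysis.
From mathcomp Require Import ring lra.
Set Implicit Arguments. Unset Strict Implicit. Unset Printing Implicit Defensive.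
Import Order.TTheory GRing.Theory Num.Theory.
Local Open Scope classical_set_scope.
Local Open Scope ring_scope.

Section HBsec.
Context {R : realType} {V : lmodType R}.

Definition sublin (p : V -> R) :=
  (forall x y, p (x + y) <= p x + p y) /\ (forall (a : R) x, 0 < a -> p (a *: x) = a * p x).

Lemma sublin0 p : sublin p -> p 0 = 0.
Proof.
move=> [_ hZ]; have h2 : (0:R) < 2 by lra.
by have := hZ 2 0 h2; rewrite scaler0 => h; lra.
Qed.

Lemma sublinN p x : sublin p -> 0 <= p x + p (- x).
Proof. by move=> hp; rewrite -(sublin0 hp) -(subrr x); apply: hp.1. Qed.

Lemma sublinZ0 p (a : R) x : sublin p -> 0 <= a -> p (a *: x) = a * p x.
Proof.
move=> hp; rewrite le_eqVlt => /orP[/eqP <-|]; last exact: hp.2.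
by rewrite scale0r mul0r sublin0.
Qed.


Lemma HB0 (p : V -> R) : sublin p -> exists f : V -> R,
  (forall x, f x <= p x) /\ (forall a x y, f (a *: x + y) = a * f x + f y).
Proof.
move=> hp.
pose T := {q : V -> R | sublin q /\ forall x, q x <= p x}.
pose Rq := fun q1 q2 : T => `[< forall x, sval q2 x <= sval q1 x >].
have [q qmax] : exists q : T, premaximal Rq q.
  apply: (@ZL_preorder T (exist _ p (conj hp (fun x => lexx _))) Rq).
  - by move=> t; apply/asboolP.
  - move=> r s t /asboolP h1 /asboolP h2; apply/asboolP => x.
    exact: le_trans (h2 x) (h1 x).
  move=> A Atot.
  pose mem g := g = p \/ exists2 q : T, A q & g = sval q.
  have memS g : mem g -> sublin g /\ forall x, g x <= p x.
    by case=> [->|[q _ ->]]; [split => //|exact: (svalP q)].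
  have memC g1 g2 : mem g1 -> mem g2 ->
      (forall x, g1 x <= g2 x) \/ (forall x, g2 x <= g1 x).
    case=> [->|[q1 Aq1 ->]]; case=> [->|[q2 Aq2 ->]].
    - by left.
    - by right => x; exact: (svalP q2).2.
    - by left => x; exact: (svalP q1).2.
    - by case: (Atot _ _ Aq1 Aq2) => /asboolP h; [right|left] => x; exact: h.
  pose S x := [set g x | g in mem].
  pose Q x := inf (S x).
  have Sne x : S x !=set0 by exists (p x), p => //; left.
  have Slb x : has_lbound (S x).
    exists (- p (- x)) => _ [g /memS [gs gp] <-].
    by have := sublinN x gs; have := gp (-x); lra.
  have QS g x : mem g -> Q x <= g x.
    by move=> mg; apply: (ge_inf (Slb x)); exists g.
  have Qsub : sublin Q.
    split.
    - move=> x y.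
      suff : Q (x + y) - Q y <= Q x by lra.
      apply: lb_le_inf (Sne x) _ => _ [g1 m1 <-].
      suff : Q (x + y) - g1 x <= Q y by lra.
      apply: lb_le_inf (Sne y) _ => _ [g2 m2 <-].
      suff : Q (x + y) <= g1 x + g2 y by lra.
      case: (memC _ _ m1 m2) => h.
      + apply: le_trans (QS _ _ m1) _; apply: le_trans ((memS _ m1).1.1 x y) _.
        by have := h y; lra.
      + apply: le_trans (QS _ _ m2) _; apply: le_trans ((memS _ m2).1.1 x y) _.
        by have := h x; lra.
    - move=> a x a0; apply/eqP; rewrite eq_le; apply/andP; split.
      + rewrite -ler_pdivrMl //; apply: lb_le_inf (Sne x) _ => _ [g m <-].
        rewrite ler_pdivrMl // -(memS g m).1.2 //; exact: QS.
      + apply: lb_le_inf (Sne (a *: x)) _ => _ [g m <-].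
        rewrite (memS g m).1.2 // ler_pM2l //; exact: QS.
  exists (exist _ Q (conj Qsub (fun x => QS p x (or_introl erefl)))).
  by move=> s As; apply/asboolP => x /=; apply: QS; right; exists s.
case: q qmax => qq [hq qp] qmax.
have key x0 : qq (- x0) = - qq x0.
  pose S x := [set qq (x + t *: x0) - t * qq x0 | t in [set t : R | 0 <= t]].
  pose Q x := inf (S x).
  have Sne x : S x !=set0.
    by exists (qq x), 0 => /=; rewrite ?scale0r ?addr0 ?mul0r ?subr0.
  have Slb x : has_lbound (S x).
    exists (- qq (- x)) => _ [t /= t0 <-].
    have := hq.1 (x + t *: x0) (- x).
    rewrite addrC addKr sublinZ0 //; lra.
  have QS x t : 0 <= t -> Q x <= qq (x + t *: x0) - t * qq x0.
    by move=> t0; apply: (ge_inf (Slb x)); exists t.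
  have Qsub : sublin Q.
    split.
    - move=> x y.
      suff : Q (x + y) - Q y <= Q x by lra.
      apply: lb_le_inf (Sne x) _ => _ [t1 /= t10 <-].
      suff : Q (x + y) - (qq (x + t1 *: x0) - t1 * qq x0) <= Q y by lra.
      apply: lb_le_inf (Sne y) _ => _ [t2 /= t20 <-].
      have := QS (x + y) (t1 + t2) (addr_ge0 t10 t20).
      have := hq.1 (x + t1 *: x0) (y + t2 *: x0).
      rewrite addrACA -scalerDl; lra.
    - move=> a x a0; apply/eqP; rewrite eq_le; apply/andP; split.
      + rewrite -ler_pdivrMl //; apply: lb_le_inf (Sne x) _ => _ [t /= t0 <-].
        rewrite ler_pdivrMl //.
        have := QS (a *: x) (a * t) (mulr_ge0 (ltW a0) t0).
        rewrite -scalerA -scalerDr hq.2 //; lra.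
      + apply: lb_le_inf (Sne (a *: x)) _ => _ [t /= t0 <-].
        have ha : a * a^-1 = 1 by rewrite mulfV // gt_eqF.
        have e : a *: x + t *: x0 = a *: (x + (a^-1 * t) *: x0).
          by rewrite scalerDr scalerA mulrA ha mul1r.
        rewrite e hq.2 //.
        have ai : 0 <= a^-1 by rewrite invr_ge0 ltW.
        have h := QS x (a^-1 * t) (mulr_ge0 ai t0).
        by move: h; rewrite -(ler_pM2l a0) mulrBr !mulrA ha mul1r.
  have Qp x : Q x <= p x.
    apply: le_trans (qp x); have := QS x 0 (lexx _).
    by rewrite scale0r addr0 mul0r subr0.
  have := qmax (exist _ Q (conj Qsub Qp)).
  have Qq : Rq (exist _ qq (conj hq qp)) (exist _ Q (conj Qsub Qp)).
    apply/asboolP => x /=; have := QS x 0 (lexx _).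
    by rewrite scale0r addr0 mul0r subr0.
  move=> /(_ Qq) /asboolP /= h.
  have := h (- x0); have := QS (- x0) 1 ler01.
  rewrite scale1r addNr sublin0 // mul1r sub0r => h1 h2.
  have := sublinN x0 hq; lra.
exists qq; split => // a x y.
have add u w : qq (u + w) = qq u + qq w.
  apply/eqP; rewrite eq_le hq.1 /=.
  have := hq.1 (u + w) (- w); rewrite addrK key; lra.
rewrite add; congr (_ + _).
have [a0|a0|->] := ltgtP a 0; last by rewrite scale0r mul0r sublin0.
- have -> : a *: x = - ((- a) *: x) by rewrite scaleNr opprK.
  rewrite key hq.2 ?oppr_gt0 //; lra.
- exact: hq.2.
Qed.

End HBsec.

Section Sep.
Context {R : realType} {V : normedModType R}.

Definition cvx (D : set V) := forall x y (l : R), D x -> D y -> 0 <= l -> l <= 1 ->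
  D (l *: x + (1 - l) *: y).

Lemma sep (D : set V) (δ : R) : cvx D -> D !=set0 -> (forall z, D z -> δ <= `|z|) ->
  exists f : V -> R, (forall a x y, f (a *: x + y) = a * f x + f y) /\
    (forall y, `|f y| <= `|y|) /\ (forall z, D z -> δ <= f z).
Proof.
move=> cD [z0 Dz0] Dd.
pose S (y : V) := [set r | exists l z, [/\ 0 <= l, D z & r = `|y + l *: z| - l * δ]].
pose p y := inf (S y).
have Sne y : S y !=set0.
  by exists `|y|, 0, z0; split => //; rewrite scale0r addr0 mul0r subr0.
have Slb y : has_lbound (S y).
  exists (- `|y|) => _ [l [z [l0 Dz ->]]].
  have := lerB_normD (l *: z) y; rewrite normrZ ger0_norm // (addrC (l *: z) y).
  have := ler_wpM2l l0 (Dd z Dz); lra.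
have pS y l z : 0 <= l -> D z -> p y <= `|y + l *: z| - l * δ.
  by move=> l0 Dz; apply: (ge_inf (Slb y)); exists l, z.
have pn y : p y <= `|y|.
  by have := pS y 0 z0 (lexx _) Dz0; rewrite scale0r addr0 mul0r subr0.
have hp : sublin p.
  split.
  - move=> x y.
    suff : p (x + y) - p y <= p x by lra.
    apply: lb_le_inf (Sne x) _ => _ [l1 [z1 [l10 Dz1 ->]]].
    suff : p (x + y) - (`|x + l1 *: z1| - l1 * δ) <= p y by lra.
    apply: lb_le_inf (Sne y) _ => _ [l2 [z2 [l20 Dz2 ->]]].
    have [s0|s0] := eqVneq (l1 + l2) 0.
      have l1z : l1 = 0 by lra.
      have l2z : l2 = 0 by lra.
      rewrite l1z l2z !scale0r !addr0 !mul0r !subr0.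
      have := pn (x + y); have := ler_normD x y; lra.
    have sp : 0 < l1 + l2 by rewrite lt_neqAle eq_sym s0 addr_ge0.
    pose lam := l1 / (l1 + l2).
    have lam0 : 0 <= lam by rewrite divr_ge0 // ltW.
    have lam1 : lam <= 1 by rewrite ler_pdivrMr // mul1r lerDl.
    have Dz := cD _ _ _ Dz1 Dz2 lam0 lam1.
    have e : (l1 + l2) *: (lam *: z1 + (1 - lam) *: z2) = l1 *: z1 + l2 *: z2.
      rewrite scalerDr !scalerA; congr (_ *: _ + _ *: _); rewrite /lam.
        by rewrite mulrC -mulrA mulVf ?mulr1.
      by rewrite mulrBr mulr1 mulrCA mulfV // mulr1; lra.
    have := pS (x + y) _ _ (ltW sp) Dz; rewrite e.
    have := ler_normD (x + l1 *: z1) (y + l2 *: z2).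
    rewrite addrACA; lra.
  - move=> a x a0; apply/eqP; rewrite eq_le; apply/andP; split.
    + rewrite -ler_pdivrMl //; apply: lb_le_inf (Sne x) _ => _ [l [z [l0 Dz ->]]].
      rewrite ler_pdivrMl //.
      have := pS (a *: x) (a * l) z (mulr_ge0 (ltW a0) l0) Dz.
      by rewrite -scalerA -scalerDr normrZ gtr0_norm // mulrBr mulrA.
    + apply: lb_le_inf (Sne (a *: x)) _ => _ [l [z [l0 Dz ->]]].
      have ha : a * a^-1 = 1 by rewrite mulfV // gt_eqF.
      have e : a *: x + l *: z = a *: (x + (a^-1 * l) *: z).
        by rewrite scalerDr scalerA mulrA ha mul1r.
      rewrite e normrZ gtr0_norm //.
      have ai : 0 <= a^-1 by rewrite invr_ge0 ltW.
      have h := pS x (a^-1 * l) z (mulr_ge0 ai l0) Dz.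
      by move: h; rewrite -(ler_pM2l a0) mulrBr !mulrA ha mul1r.
have [f [fp fl]] := HB0 hp.
have f0 : f 0 = 0 by have := fl 1 0 0; rewrite scaler0 add0r mul1r; lra.
have fN y : f (- y) = - f y.
  by have := fl (-1) y 0; rewrite addr0 f0 addr0 scaleN1r mulN1r.
exists f; split => //; split.
- move=> y; rewrite ler_norml; apply/andP; split.
    by have := fp (- y); have := pn (- y); rewrite fN normrN; lra.
  by apply: le_trans (fp y) (pn y).
- move=> z Dz; have := fp (- z); have := pS (- z) 1 z ler01 Dz.
  by rewrite scale1r addNr normr0 mul1r fN; lra.
Qed.

End Sep.

Section Clo.
Context {R : realType} {V : normedModType R}.
Lemma closure_normP (A : set V) p :
  closure A p <-> forall e : R, 0 < e -> exists a, A a /\ `|p - a| < e.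
Proof.
split.
- move=> cl e e0.
  have nb : nbhs p (ball p e) by apply/nbhs_ballP; exists e.
  have [a [Aa ba]] := cl _ nb; exists a; split => //.
  by move: ba; rewrite -ball_normE.
- move=> h B /nbhs_ballP [e /= e0 sub].
  have [a [Aa pa]] := h e e0; exists a; split => //; apply: sub.
  by rewrite -ball_normE.
Qed.
End Clo.

Section ULim.
Context {R : realType} (U : set_system nat) {UU : UltraFilter U}.

Definition ulim (a : nat -> R) (l : R) := forall e, 0 < e -> U [set n | `|a n - l| < e].
Definition uL (a : nat -> R) := sup [set r | U [set n | r <= a n]].

Lemma ulimL a B : (forall n, `|a n| <= B) -> ulim a (uL a).
Proof.
move=> aB.
pose E := [set r | U [set n | r <= a n]].
have hs : has_sup E.
  split.
    exists (- B); apply: filterS filterT => n _.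
    by have := aB n; rewrite ler_norml => /andP[].
  exists B => r Er; have [n /= rn] := filter_ex Er.
  by have := aB n; rewrite ler_norml => /andP[_]; apply: le_trans.
move=> e e0.
have [r Er ler] := sup_adherent e0 hs.
have h1 : U [set n | uL a - e < a n].
  by apply: filterS Er => n /= rn; apply: lt_le_trans rn.
have h2 : U [set n | a n < uL a + e].
  case: (in_ultra_setVsetC [set n | uL a + e <= a n] UU) => h.
    have := sup_upper_bound hs h; rewrite /uL -/E; lra.
  by apply: filterS h => n /= /negP; rewrite -ltNge.
apply: filterS (filterI h1 h2) => n /= [H1 H2]; rewrite ltr_norml; apply/andP; split; lra.
Qed.

Lemma ulim_uniq a l1 l2 : ulim a l1 -> ulim a l2 -> l1 = l2.
Proof.
move=> h1 h2; apply/eqP; apply: contraT => ne.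
have e0 : 0 < `|l1 - l2| / 2 by rewrite divr_gt0 // normr_gt0 subr_eq0.
have [n /= [H1 H2]] := filter_ex (filterI (h1 _ e0) (h2 _ e0)).
have := ler_distD (a n) l1 l2; rewrite distrC in H1; lra.
Qed.

Lemma ulim_lin a b (c : R) la lb : ulim a la -> ulim b lb ->
  ulim (fun n => c * a n + b n) (c * la + lb).
Proof.
move=> ha hb e e0.
have c1 : 0 < `|c| + 1 by rewrite ltr_wpDl.
have e1 : 0 < e / (2 * (`|c| + 1)) by rewrite divr_gt0 // mulr_gt0.
have e2 : 0 < e / 2 by rewrite divr_gt0.
apply: filterS (filterI (ha _ e1) (hb _ e2)) => n /= [H1 H2].
have -> : c * a n + b n - (c * la + lb) = c * (a n - la) + (b n - lb) by ring.
apply: le_lt_trans (ler_normD _ _) _; rewrite normrM.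
have : `|c| * `|a n - la| <= (`|c| + 1) * (e / (2 * (`|c| + 1))).
  by apply: ler_pM => //; [lra|exact: ltW].
have -> : (`|c| + 1) * (e / (2 * (`|c| + 1))) = e / 2.
  by field; rewrite gt_eqF.
lra.
Qed.

Lemma ulim_ge a l m : ulim a l -> U [set n | m <= a n] -> m <= l.
Proof.
move=> h hm; rewrite leNgt; apply/negP => lm.
have e0 : 0 < m - l by lra.
have [n /= [H1 H2]] := filter_ex (filterI (h _ e0) hm).
move: H1; rewrite ltr_norml => /andP[_]; lra.
Qed.

Lemma ulim_le a l m : ulim a l -> U [set n | a n <= m] -> l <= m.
Proof.
move=> h hm; rewrite leNgt; apply/negP => lm.
have e0 : 0 < l - m by lra.
have [n /= [H1 H2]] := filter_ex (filterI (h _ e0) hm).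
move: H1; rewrite ltr_norml => /andP[H1 _]; lra.
Qed.

End ULim.

Section Geo.
Context {R : realType} {V : normedModType R}.
Implicit Types (x y v c : V) (F : set V).

Lemma conv_sub (l : R) (a b c : V) :
  l *: a + (1 - l) *: b - c = l *: (a - c) + (1 - l) *: (b - c).
Proof. by rewrite !scalerBr addrACA -opprD -scalerDl subrKC scale1r. Qed.

Lemma cvx_of_convex F : convex_set F -> cvx F.
Proof.
move=> cF x y l Fx Fy l0 l1.
by have := cF x y (Itv01 l0 l1) (mem_set Fx) (mem_set Fy); rewrite inE.
Qed.

Lemma Ft_v F v t : F v -> Ft F v t v.
Proof. by move=> Fv; exists v => //; rewrite -scalerDl subrK scale1r. Qed.

Lemma Ft_mono F v (s t : R) : cvx F -> F v -> 0 < s -> s <= t ->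
  Ft F v s `<=` Ft F v t.
Proof.
move=> cF Fv s0 st _ [y Fy <-].
have t0 : 0 < t by apply: lt_le_trans st.
have l0 : 0 <= s / t by rewrite divr_ge0 // ltW.
have l1 : s / t <= 1 by rewrite ler_pdivrMr // mul1r.
exists (s / t *: y + (1 - s / t) *: v); first exact: cF.
rewrite scalerDr !scalerA addrCA -scalerDl [RHS]addrC; congr (_ *: _ + _ *: _).
  by field; rewrite gt_eqF.
by field; rewrite gt_eqF.
Qed.

Lemma Ft_cvx F v t : cvx F -> cvx (Ft F v t).
Proof.
move=> cF _ _ l [y1 Fy1 <-] [y2 Fy2 <-] l0 l1.
exists (l *: y1 + (1 - l) *: y2); first exact: cF.
rewrite !scalerDr !scalerA addrACA -scalerDl; congr (_ *: _ + (_ *: _ + _ *: _)).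
- by ring.
- by rewrite mulrC.
- by rewrite mulrC.
Qed.

Lemma Ft_exist F v t x : existence_set F -> 0 < t ->
  exists d, Ft F v t d /\ forall c, Ft F v t c -> `|d - c| <= `|x - c|.
Proof.
move=> [_ FR] t0.
have [e [Fe He]] := FR (v + t^-1 *: (x - v)).
exists ((1 - t) *: v + t *: e); split; first by exists e.
move=> _ [y Fy <-].
have ht : t * t^-1 = 1 by rewrite mulfV // gt_eqF.
have E1 : (1 - t) *: v + t *: e - ((1 - t) *: v + t *: y) = t *: (e - y).
  by rewrite opprD addrACA subrr add0r scalerBr.
have E2 : x - ((1 - t) *: v + t *: y) = t *: (v + t^-1 *: (x - v) - y).
  rewrite scalerBr scalerDr scalerA ht scale1r scalerBl scale1r opprD opprB addrA.
  by congr (_ - _); rewrite addrCA.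
rewrite E1 E2 !normrZ gtr0_norm // ler_pM2l //; exact: He.
Qed.

End Geo.

Theorem corollary14 (R : realType) (V : completeNormedModType R)
  (F : set V) (v : V) :
  @reflexive_space R V -> convex_set F -> existence_set F -> F v ->
  existence_set (Cv F v).
Proof.
move=> refl cF0 exF Fv.
have cF := cvx_of_convex cF0.
pose G (t : R) := Ft F v t.
pose K1 := \bigcup_(t in [set t : R | 0 < t]) G t.
have K1v : K1 v by exists 1; [rewrite /= ltr01|exact: Ft_v].
have cK1 : cvx K1.
  move=> y z l [s /= s0 Gs] [t /= t0 Gt] l0 l1.
  have [st|ts] := leP s t.
    by exists t => //; apply: (Ft_cvx cF (Ft_mono cF Fv s0 st Gs) Gt l0 l1).
  by exists s => //; apply: (Ft_cvx cF Gs (Ft_mono cF Fv t0 (ltW ts) Gt) l0 l1).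
split; first by exists v; apply: subset_closure.
move=> x.
have hd : forall n : nat, exists d, G n.+1%:R d /\
    forall c, G n.+1%:R c -> `|d - c| <= `|x - c|.
  by move=> n; apply: Ft_exist.
have [dn hdn] := choice hd.
have [U [UU Uev]] : exists U : set_system nat, UltraFilter U /\
    forall N, U [set n | (N <= n)%N].
  have [U [UU sub]] := ultraFilterLemma (_ : ProperFilter (\oo : set_system nat)).
  by exists U; split => // N; apply: sub; exists N.
pose B := `|x - v| + `|v|.
have dnB n : `|dn n| <= B.
  have := (hdn n).2 v (Ft_v _ Fv).
  have := ler_normD (dn n - v) v; rewrite subrK /B; lra.
have B0 : 0 <= B by rewrite /B addr_ge0.
pose Phi (h : V -> R) := uL U (fun n => h (dn n)).
have bnd f : bdd_lin_fun f -> exists Bf, forall n, `|f (dn n)| <= Bf.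
  move=> [_ [M hM]]; exists (`|M| * B) => n.
  have h1 := hM (dn n).
  have h2 : M * `|dn n| <= `|M| * `|dn n| by apply: ler_wpM2r => //; exact: ler_norm.
  have h3 : `|M| * `|dn n| <= `|M| * B by apply: ler_wpM2l => //; exact: dnB.
  lra.
have ulimf f : bdd_lin_fun f -> ulim U (fun n => f (dn n)) (Phi f).
  by move=> /bnd [Bf hB]; exact: ulimL hB.
have bid : bidual_elt Phi.
  split.
    move=> a f g hf hg.
    have [Bf hBf] := bnd f hf; have [Bg hBg] := bnd g hg.
    apply: (ulim_uniq (UU := UU) _ (ulim_lin a (ulimf f hf) (ulimf g hg))).
    apply: (ulimL (B := `|a| * Bf + Bg)) => n.
    apply: le_trans (ler_normD _ _) _; rewrite normrM.
    have := ler_wpM2l (normr_ge0 a) (hBf n); have := hBg n; lra.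
  exists B => f K hf hK.
  have hn : forall n, `|f (dn n)| <= B * K.
    move=> n; have [K0|K0] := leP 0 K.
      by apply: le_trans (hK _) _; have := ler_wpM2l K0 (dnB n); lra.
    have z (y : V) : `|y| = 0.
      have := hK y; have := normr_ge0 (f y); have := normr_ge0 y; nra.
    by have := hK (dn n); rewrite /B !z !mulr0 addr0 mul0r.
  have hl := ulimf f hf.
  rewrite ler_norml; apply/andP; split.
    apply: (ulim_ge hl); apply: filterS filterT => n _.
    by have := hn n; rewrite ler_norml => /andP[].
  apply: (ulim_le hl); apply: filterS filterT => n _.
  by have := hn n; rewrite ler_norml => /andP[].
have [d hd'] := refl Phi bid.
have wl f : bdd_lin_fun f -> ulim U (fun n => f (dn n)) (f d).
  by move=> hf; rewrite -hd' //; exact: ulimf.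
have mazur (K : set V) : cvx K -> (exists N, forall n, (N <= n)%N -> K (dn n)) ->
    closure K d.
  move=> cK [N hN]; apply/closure_normP => e e0.
  apply: contrapT => hne.
  pose D := [set k - d | k in K].
  have cD : cvx D.
    move=> _ _ l [k1 K1k <-] [k2 K2k <-] l0 l1.
    by exists (l *: k1 + (1 - l) *: k2); [exact: cK|rewrite conv_sub].
  have D0 : D !=set0 by exists (dn N - d), (dn N); [apply: hN|].
  have De z : D z -> e <= `|z|.
    move=> [k Kk <-]; rewrite leNgt; apply/negP => ke.
    by apply: hne; exists k; split => //; rewrite distrC.
  have [f [fl [fb fD]]] := sep cD D0 De.
  have hf : bdd_lin_fun f by split => //; exists 1 => y; rewrite mul1r.
  have fB y z : f (y - z) = f y - f z.
    have f0 : f 0 = 0 by have := fl 1 0 0; rewrite scaler0 add0r mul1r; lra.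
    by have := fl (-1) z y; rewrite scaleN1r mulN1r addrC => ->; rewrite addrC.
  suff h : U [set n | f d + e <= f (dn n)].
    by have := @ulim_ge R U UU _ _ _ (wl f hf) h; lra.
  apply: filterS (Uev N) => n /= Nn.
  have := fD _ (ex_intro2 _ _ (dn n) (hN n Nn) erefl); rewrite fB; lra.
have dC : Cv F v d.
  apply: mazur => //; exists 0%N => n _; exists n.+1%:R => //=.
  exact: (hdn n).1.
have dK1 c : K1 c -> `|d - c| <= `|x - c|.
  move=> [s /= s0 Gs].
  pose Kb := [set y : V | `|y - c| <= `|x - c|].
  have cKb : cvx Kb.
    move=> y1 y2 l K1y K2y l0 l1; rewrite /Kb /= conv_sub.
    apply: le_trans (ler_normD _ _) _; rewrite !normrZ ger0_norm // ger0_norm ?subr_ge0 //.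
    have l1' : 0 <= 1 - l by lra.
    have := ler_wpM2l l0 K1y; have := ler_wpM2l l1' K2y; lra.
  have [N hN] : exists N : nat, s <= N%:R.
    exists (Num.Def.archi_bound s); exact: ltW (archi_boundP (ltW s0)).
  have cl : closure Kb d.
    apply: mazur cKb _; exists N => n Nn; apply: (hdn n).2; apply: Ft_mono Gs => //.
    apply: (le_trans hN); rewrite ler_nat; exact: leqW.
  apply/ler_addgt0Pr => e e0.
  have [y [Kby dy]] := (closure_normP _ _).1 cl e e0.
  have := ler_distD y d c; rewrite /Kb /= in Kby; lra.
exists d; split => // c /closure_normP hc.
apply/ler_addgt0Pr => e e0.
have e2 : 0 < e / 2 by rewrite divr_gt0.
have [c' [K1c' cc']] := hc _ e2.
have := dK1 c' K1c'.
have := ler_distD c' d c; have := ler_distD c x c'.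
have := distrC c c'; lra.
Qed.
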